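(* Let $G$ be a planar trivalent graph and let $M$ be a perfect matching of $G$. Then $$\langle G:M\rangle_2(1) = |G:M|_2,$$ i.e. the $2$-factor polynomial of $(G,M)$ evaluated at $z=1$ equals the number of $2$-factors of $G$ that contain every edge of $M$.
   Context: Graphs are finite and may have multiple edges; a trivalent graph is one in which every vertex has degree $3$. A $2$-factor of $G$ is a spanning subgraph in which every vertex has degree $2$. Write $[G:M]_2$ for the set of $2$-factors of $G$ containing $M$ as a subgraph, and $|G:M|_2$ for its cardinality. The $2$-factor polynomial is defined as follows. A perfect matching drawing $\Gamma$ is a collection of trivalent vertices, edges and vertex-free closed curves drawn in the $2$-sphere by a generic immersion (edges and curves may cross transversally at finitely many double points away from vertices; crossings carry no extra data), together with a set $M$ of edges forming a perfect matching of the vertices. For a matching edge $e=uv$, let $\alpha,\beta$ be the other two edge-ends at $u$ and $\gamma,\delta$ the other two edge-ends at $v$, labelled so that in a small disk around $e$ the four edge-ends appear in the cyclic order $\alpha,\beta,\delta,\gamma$. The $0$-resolution at $e$ deletes $e,u,v$ and joins $\alpha$ to $\gamma$ and $\beta$ to $\delta$ by two disjoint arcs inside the disk; the $1$-resolution instead joins $\alpha$ to $\delta$ and $\beta$ to $\gamma$ by two arcs crossing once. A state $s$ assigns $0$ or $1$ to every edge of $M$; performing the corresponding resolutions at all matching edges gives a collection of $c(s)$ immersed closed curves. The $2$-factor bracket is $$\langle \Gamma\rangle_2(z)=\sum_{s}(-z)^{|s|}(z+z^{-1})^{c(s)}\in\mathbb{Z}[z,z^{-1}],$$ where $|s|$ is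 the number of edges assigned $1$. Equivalently, $\langle\Gamma\rangle_2=\langle\Gamma_0\rangle_2-z\langle\Gamma_1\rangle_2$ for the $0$- and $1$-resolutions $\Gamma_0,\Gamma_1$ at any matching edge, each vertex-free closed curve contributes a factor $z+z^{-1}$, and the bracket is multiplicative under disjoint union. For a planar trivalent graph $G$ with perfect matching $M$, the $2$-factor polynomial $\langle G:M\rangle_2(z)$ is $\langle\Gamma\rangle_2(z)$ for any embedding $\Gamma$ of $G$ in the $2$-sphere with the edges of $M$ marked (this does not depend on the embedding). *)

(* Defs.v *)
(* A planar trivalent graph (multi-edges and loops allowed)
   together with a plane embedding is encoded as a combinatorial map
   (rotation system) on a finite set D of darts (half-edges):
   - alpha : fixed-point-free involution, pairing the two ends of each edge;
   - sigma : rotation permutation, its cycles are the vertices, listing the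
             edge-ends around each vertex in cyclic (counterclockwise) order;
   - faces are the cycles of alpha * sigma (i.e. x |-> sigma (alpha x)).
   The embedding is in the sphere iff Euler's formula V - E + F = 2 C holds. *)
From HB Require Import structures.
From mathcomp Require Import all_boot all_order all_fingroup all_algebra.
Set Implicit Arguments.
Unset Strict Implicit.
Unset Printing Implicit Defensive.
Import GRing.Theory.

Section Map.
Variables (D : finType) (sigma alpha : {perm D}).

Definition trivalent : Prop :=
  forall x, [/\ sigma x != x, sigma (sigma x) != x & sigma (sigma (sigma x)) = x].

Definition dart_involution : Prop :=
  forall x, alpha x != x /\ alpha (alpha x) = x.

Definition map_rel : rel D := fun x y => (y == sigma x) || (y == alpha x).

Definition planar_map : Prop :=
  #|porbits sigma| + #|porbits (alpha * sigma)%g|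
  = #|porbits alpha| + 2 * n_comp map_rel D.

(* a set of darts closed under alpha = a set of edges *)
Definition alpha_closed (S : {set D}) : bool := [forall x in S, alpha x \in S].

Definition deg_at (S : {set D}) (x : D) : nat :=
  (x \in S) + (sigma x \in S) + (sigma (sigma x) \in S).

(* M (as a set of darts) is a perfect matching: a set of edges such that each
   vertex is incident to exactly one of them (loops excluded automatically) *)
Definition perfect_matching (M : {set D}) : Prop :=
  alpha_closed M /\ forall x, deg_at M x = 1%N.

Definition two_factors_containing (M : {set D}) : {set {set D}} :=
  [set F : {set D} | [&& alpha_closed F, [forall x, deg_at F x == 2%N] & M \subset F]].

(* A state is a set S of matching darts
   closed under alpha (the matching edges assigned 1).  For a non-matching
   dart x at vertex u with matching dart m at u, and m' = alpha m at the other
   end v, the ends around the matching edge are x1 = sigma m, x2 = sigma^2 m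
   (at u) and y1 = sigma m', y2 = sigma^2 m' (at v), in cyclic order
   x1, x2, y1, y2 around a disk containing the edge, i.e.
   alpha=x1, beta=x2, delta=y1, gamma=y2.
   0-resolution: x1 -- y2, x2 -- y1 ; 1-resolution: x1 -- y1, x2 -- y2.
   conn M S x = the edge-end joined to x by the resolution arc. *)
Definition conn (M S : {set D}) (x : D) : D :=
  if sigma (sigma x) \in M then
    (* x = x1 *)
    let m := sigma (sigma x) in
    if m \in S then sigma (alpha m) else sigma (sigma (alpha m))
  else
    (* x = x2, m = sigma x *)
    let m := sigma x in
    if m \in S then sigma (sigma (alpha m)) else sigma (alpha m).

Definition curve_rel (M S : {set D}) : rel D := fun x y =>
  [&& x \notin M, y \notin M &
      [|| y == alpha x, y == conn M S x | x == conn M S y]].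

Definition ncurves (M S : {set D}) : nat :=
  n_comp (curve_rel M S) [pred x | x \notin M].

Definition state (M S : {set D}) : bool := (S \subset M) && alpha_closed S.

(* The 2-factor bracket evaluated at a nonzero z of a field:
   sum_s (-z)^|s| (z + z^-1)^c(s), |s| = number of edges assigned 1. *)
Definition two_factor_bracket (R : fieldType) (M : {set D}) (z : R) : R :=
  \sum_(S : {set D} | state M S)
     (- z) ^+ (#|S|./2) * (z + z^-1) ^+ (ncurves M S).

End Map.

(* Main.v *)
Require Import Defs.
From HB Require Import structures.
From mathcomp Require Import all_boot all_order all_fingroup all_algebra.
From mathcomp Require Import zify.
Set Implicit Arguments.
Unset Strict Implicit.
Unset Printing Implicit Defensive.
Section GenGraph.
Variable T : finType.
Implicit Types (e : rel T).

Lemma connect_inv e (P : T -> bool) x y :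
  (forall z w, e z w -> P z -> P w) -> P x -> connect e x y -> P y.
Proof.
move=> HP Px /connectP[p ep ->]; elim: p x Px ep => //= z p IH x Px /andP[exz pz].
exact: IH (HP _ _ exz Px) pz.
Qed.

Lemma connect_map (U : finType) (e' : rel U) (f : T -> U) e x y :
  (forall z w, e z w -> connect e' (f z) (f w)) -> connect e x y -> connect e' (f x) (f y).
Proof.
move=> H; apply: (@connect_inv e (fun w => connect e' (f x) (f w))) => //.
by move=> z w ezw c; apply: connect_trans c (H _ _ ezw).
Qed.

Lemma n_compT e : n_comp e T = #|[pred x | roots e x]|.
Proof. by apply: eq_card => x; rewrite !inE andbT. Qed.

Lemma n_comp_le e1 e2 : connect_sym e1 -> connect_sym e2 ->
  (forall u v, connect e1 u v -> connect e2 u v) -> n_comp e2 T <= n_comp e1 T.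
Proof.
move=> s1 s2 H.
have inj : {in [pred x | roots e2 x] &, injective (fingraph.root e1)}.
  move=> u v /eqP ru /eqP rv /(fingraph.rootP s1) /H /(fingraph.rootP s2); rewrite ru rv //.
rewrite !n_compT -(card_in_image inj); apply: subset_leq_card.
apply/subsetP => z /imageP[u _ ->]; by rewrite !inE roots_root.
Qed.

Definition edge_rel (x y : T) : rel T :=
  fun u v => ((u == x) && (v == y)) || ((u == y) && (v == x)).

Lemma n_comp_add_edge e1 e2 x y : connect_sym e1 -> connect_sym e2 ->
  (forall u v, e2 u v -> connect (relU e1 (edge_rel x y)) u v) ->
  n_comp e1 T <= (n_comp e2 T).+1.
Proof.
move=> s1 s2 H.
have key : forall u v, connect e2 u v -> connect e1 u v \/
     ((connect e1 u x || connect e1 u y) && (connect e1 v x || connect e1 v y)).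
  have k1 : forall u v, connect e2 u v -> connect e1 u v \/ (connect e1 u x || connect e1 u y).
    move=> u v c2; have c: connect (relU e1 (edge_rel x y)) u v.
      by apply: connect_sub c2 => a b /H.
    case: (boolP (connect e1 u x || connect e1 u y)) => hu; [by right | left].
    move: hu; rewrite negb_or => /andP[nx ny].
    apply: (@connect_inv _ (connect e1 u) u v) c => // z w.
    case/orP => [ezw cz | ].
      exact: connect_trans cz (connect1 ezw).
    rewrite /edge_rel => /orP[] /andP[/eqP -> /eqP ->] c; by rewrite c in nx ny.
  move=> u v c; case: (k1 u v c) => [-> | hu]; first by left.
  have c' : connect e2 v u by rewrite s2.
  case: (k1 v u c') => [h | hv]; first by left; rewrite s1.
  by right; rewrite hu hv.
pose A := [pred r | roots e1 r && (r != fingraph.root e1 y)].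
have inj : {in A &, injective (fingraph.root e2)}.
  move=> u v /andP[/eqP ru uy] /andP[/eqP rv vy] /(fingraph.rootP s2) c.
  case: (key u v c) => [/(fingraph.rootP s1) | /andP[hu hv]]; first by rewrite ru rv.
  have rx : forall w, fingraph.root e1 w = w -> fingraph.root e1 w != fingraph.root e1 y ->
        (connect e1 w x || connect e1 w y) -> w = fingraph.root e1 x.
    move=> w rw wy /orP[] /(fingraph.rootP s1) h; first by rewrite -rw h.
    by rewrite h in wy; rewrite eqxx in wy.
  by rewrite (rx u ru _ hu) ?ru // (rx v rv _ hv) ?rv.
have h1 : #|A| <= n_comp e2 T.
  rewrite n_compT -(card_in_image inj); apply: subset_leq_card.
  apply/subsetP => z /imageP[u _ ->]; by rewrite !inE roots_root.
have h2 : n_comp e1 T <= #|A|.+1.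
  rewrite n_compT (cardD1 (fingraph.root e1 y)).
  suff: #|[predD1 [pred x | roots e1 x] & fingraph.root e1 y]| <= #|A|.
    by case: (_ \in _) => /= h; rewrite ?add1n ?add0n ?ltnS // (leq_trans h).
  apply: subset_leq_card; apply/subsetP => z; rewrite !inE => /andP[zy rz].
  by rewrite /A /= rz zy.
exact: leq_trans h2 _.
Qed.

End GenGraph.
Section RH.
Variable T : finType.
Implicit Types (s a : {perm T}).

Definition rel_of s a : rel T := fun x y => (y == s x) || (y == a x).

Lemma perm_connect_sym (f : {perm T}) x y : fconnect f x y -> fconnect f y x.
Proof. by rewrite fconnect_sym //; apply: perm_inj. Qed.

Lemma rel_of_sym s a : connect_sym (rel_of s a).
Proof.
have step: forall x y, rel_of s a x y -> connect (rel_of s a) y x.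
  move=> x y /orP[] /eqP ->.
    have : fconnect s x (s x) by apply: connect1; rewrite /= eqxx.
    move/perm_connect_sym; apply: connect_sub => u v /eqP <-; apply: connect1; by rewrite /rel_of eqxx.
  have : fconnect a x (a x) by apply: connect1; rewrite /= eqxx.
  move/perm_connect_sym; apply: connect_sub => u v /eqP <-; apply: connect1; by rewrite /rel_of eqxx orbT.
suff H: forall x y, connect (rel_of s a) x y -> connect (rel_of s a) y x.
  by move=> x y; apply/idP/idP => /H.
move=> x y c.
have h : connect [rel u v | rel_of s a v u] y x by rewrite connect_rev.
by move: h; apply: connect_sub => u v /step.
Qed.

Lemma porbit_connect s a x y : y \in porbit (a * s) x -> connect (rel_of s a) x y.
Proof.
move=> /porbitP[i ->]; elim: i => [|i IH]; first by rewrite expg0 perm1.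
rewrite expgSr !permM; apply: connect_trans IH _.
set z := (((a * s) ^+ i)%g x).
apply: (@connect_trans _ _ (a z)); apply: connect1;
  by rewrite /rel_of eqxx ?orbT.
Qed.

Lemma porbit_step s x : porbit s (s x) = porbit s x.
Proof. by apply/eqP; rewrite eq_porbit_mem; have := mem_porbit s 1 x; rewrite expg1. Qed.

Lemma card_porbits1 : #|porbits (1 : {perm T})| = #|T|.
Proof.
rewrite card_imset // => x y; move/eqP; rewrite eq_porbit_mem.
by rewrite porbit.unlock cycle1 imset_set1 /aperm perm1 inE=> /eqP.
Qed.

Lemma card_porbits_le s : #|porbits s| <= #|T|.
Proof. exact: leq_imset_card. Qed.

Lemma base_RH s : #|porbits s| <= n_comp (rel_of s 1) T.
Proof.
rewrite n_compT.
have sub: porbits s \subset [set porbit s r | r in [pred x | roots (rel_of s 1) x]].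
  apply/subsetP => O /imsetP[x _ ->]; apply/imsetP.
  exists (fingraph.root (rel_of s 1) x); first by rewrite inE roots_root //; apply: rel_of_sym.
  apply/eqP; rewrite eq_sym eq_porbit_mem.
  apply: (@connect_inv _ _ (fun z => z \in porbit s x) x) (connect_root _ x).
    move=> z w /orP[] /eqP -> zx; last by rewrite perm1.
    by rewrite -eq_porbit_mem porbit_step eq_porbit_mem.
  exact: porbit_id.
exact: leq_trans (subset_leq_card sub) (leq_imset_card _ _).
Qed.

Definition RHprop s a := 
  #|porbits s| + #|porbits (a * s)| + #|porbits a| <= #|T| + 2 * n_comp (rel_of s a) T.

Lemma RH_base s a : (forall x, a x == x) -> RHprop s a.
Proof.
move=> a1; have -> : a = 1%g by apply/permP => x; rewrite perm1; apply/eqP.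
rewrite /RHprop mul1g card_porbits1; have := base_RH s; lia.
Qed.

Lemma RH_pre a x : a x != x -> #|porbits (tperm x (a x) * a)| = (#|porbits a|).+1.
Proof.
move=> ax; have := porbits_mul_tperm a x (a x).
have -> : x \in porbit a (a x).
  by rewrite porbit_sym; have := mem_porbit a 1 x; rewrite expg1.
by rewrite eq_sym ax /= addn0 addn1.
Qed.

Lemma RH_step n s a x : a x != x ->
  (forall s a', #|T| - #|porbits a'| <= n -> RHprop s a') ->
  #|T| - #|porbits a| <= n.+1 -> RHprop s a.
Proof.
move=> ax IH Hn.
set y := a x; set t := tperm x y; set a' := (t * a)%g.
have Pa' : #|porbits a'| = (#|porbits a|).+1 by apply: RH_pre.
have Ea : a = (t * a')%g by rewrite /a' mulgA tperm2 mul1g.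
have Eas : (a * s)%g = (t * (a' * s))%g by rewrite mulgA -Ea.
have HF := porbits_mul_tperm (a' * s) x y.
rewrite /= -/t -Eas (_ : (x != y) = true) in HF; last by rewrite eq_sym.
have Ha'le := card_porbits_le a'.
have IHa' := IH s a' ltac:(lia).
move: IHa'; rewrite /RHprop => IHa'; rewrite /RHprop.
have Eau : forall u, a u = a' (t u) by move=> u; rewrite {1}Ea permM.
case: (boolP (x \in porbit (a' * s) y)) => hxy; rewrite hxy /= -muln2 in HF.
- have cyx : connect (rel_of s a') y x by apply: porbit_connect.
  have cxy : connect (rel_of s a') x y by rewrite rel_of_sym.
  have le : n_comp (rel_of s a') T <= n_comp (rel_of s a) T.
    apply: n_comp_le; try apply: rel_of_sym.
    apply: connect_sub => u v /orP[] /eqP ->; first by apply: connect1; rewrite /rel_of eqxx.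
    rewrite Eau; apply: (@connect_trans _ _ (t u)); last by apply: connect1; rewrite /rel_of eqxx orbT.
    by rewrite /t; case: tpermP => // ->.
  move: HF IHa' le Pa'; set A := #|porbits (a * s)|; set B := #|porbits (a' * s)|; set P := #|porbits a'|.
  set C1 := n_comp (rel_of s a') T; set C := n_comp (rel_of s a) T; set P0 := #|porbits a|.
  clearbody A B P C1 C P0; lia.
- have le : n_comp (rel_of s a') T <= (n_comp (rel_of s a) T).+1.
    apply: (@n_comp_add_edge _ _ _ x y); try apply: rel_of_sym.
    move=> u v /orP[] /eqP ->; first by apply: connect1; rewrite /= /rel_of eqxx.
    rewrite Eau; apply: (@connect_trans _ _ (t u)); last by apply: connect1; rewrite /= /rel_of eqxx orbT.
    rewrite /t; case: tpermP => // -> ; apply: connect1; by rewrite /= /edge_rel !eqxx ?orbT.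
  move: HF IHa' le Pa'; set A := #|porbits (a * s)|; set B := #|porbits (a' * s)|; set P := #|porbits a'|.
  set C1 := n_comp (rel_of s a') T; set C := n_comp (rel_of s a) T; set P0 := #|porbits a|.
  clearbody A B P C1 C P0; lia.
Qed.

Lemma RH_ineq s a : RHprop s a.
Proof.
move: {2}(#|T| - #|porbits a|) (leqnn (#|T| - #|porbits a|)) => n.
elim: n s a => [|n IH] s a Hn.
  case: (pickP [pred x | a x != x]) => [x /= ax | a1]; last first.
    by apply: RH_base => x; move: (a1 x) => /= /negbFE.
  have := RH_pre ax; have := card_porbits_le (tperm x (a x) * a); lia.
case: (pickP [pred x | a x != x]) => [x /= ax | a1]; last first.
  by apply: RH_base => x; move: (a1 x) => /= /negbFE.
exact: RH_step ax IH Hn.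
Qed.

End RH.
Section OrbCount.
Variable T : finType.

Lemma porbit_const (U : Type) (s : {perm T}) (g : T -> U) x y :
  (forall z, g (s z) = g z) -> y \in porbit s x -> g y = g x.
Proof.
move=> H /porbitP[i ->]; elim: i => [|i IH]; first by rewrite expg0 perm1.
by rewrite expgSr permM H.
Qed.

Lemma orbit_count (U : finType) (s : {perm T}) (g : T -> U) :
  (forall z, g (s z) = g z) -> #|[set g x | x : T]| <= #|porbits s|.
Proof.
move=> H.
have E : [set [set g x] | x : T] = [set [set g z | z in O] | O : {set T} in porbits s].
  rewrite /porbits -imset_comp; apply: eq_imset => x /=.
  apply/setP => u; rewrite inE; apply/eqP/imsetP => [-> | [z zO ->]].
    by exists x => //; apply: porbit_id.
  by rewrite (porbit_const H zO).
have E2 : [set [set g x] | x : T] = set1 @: [set g x | x : T] by rewrite -imset_comp.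
have : #|[set [set g x] | x : T]| = #|[set g x | x : T]|.
  by rewrite E2 card_imset //; apply: set1_inj.
by move <-; rewrite E leq_imset_card.
Qed.

Lemma invol_count (a : {perm T}) : (forall x, a (a x) = x) -> #|T| <= 2 * #|porbits a|.
Proof.
move=> aa.
pose f x := (porbit a x, (enum_rank x < enum_rank (a x))%N).
have inj : injective f.
  move=> x y [] /eqP; rewrite eq_porbit_mem porbit_sym => /porbitP[i ey].
  have : (y == x) || (y == a x).
    rewrite ey; elim: i {ey} => [|i IH]; first by rewrite expg0 perm1 eqxx.
    rewrite expgSr permM; case/orP: IH => /eqP ->; by rewrite ?aa eqxx ?orbT.
  clear ey; case/orP => /eqP -> //; rewrite aa.
  case: (boolP (a x == x)) => [/eqP -> // | nax] h.
  exfalso; move: h; case: ltngtP => //.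
  by move/val_inj/enum_rank_inj/eqP; rewrite eq_sym (negbTE nax).
have hsub : [set f x | x : T] \subset setX (porbits a) [set: bool].
  by apply/subsetP => _ /imsetP[x _ ->]; rewrite inE /= imset_f // inE.
have := subset_leq_card hsub; rewrite card_imset // cardsX cardsT card_bool cardT /=.
by rewrite -cardT mulnC.
Qed.

End OrbCount.
Section Cover.
Variables (D : finType) (sg al : {perm D}) (w : D -> bool) (h0 : D -> bool).
Hypothesis hal : forall x, al x != x /\ al (al x) = x.
Hypothesis hw : forall x, w (al x) = w x.
Hypothesis hh0 : forall x, h0 (sg x) = h0 x (+) w x.
Hypothesis planar :
  #|porbits sg| + #|porbits (al * sg)| = #|porbits al| + 2 * n_comp (rel_of sg al) D.

Definition cs (z : D * bool) := (sg z.1, z.2 (+) w z.1).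
Definition ca (z : D * bool) := (al z.1, z.2 (+) w z.1).

Lemma cs_inj : injective cs.
Proof.
move=> [x b] [y c] [] /perm_inj exy; rewrite -exy.
by move/(congr1 (fun t => t (+) w x)) => /=; rewrite -!addbA addbb !addbF => ->.
Qed.
Lemma ca_inj : injective ca.
Proof.
move=> [x b] [y c] [] /perm_inj exy; rewrite -exy.
by move/(congr1 (fun t => t (+) w x)) => /=; rewrite -!addbA addbb !addbF => ->.
Qed.

Definition sgc : {perm D * bool} := perm cs_inj.
Definition alc : {perm D * bool} := perm ca_inj.

Lemma sgcE z : sgc z = cs z. Proof. exact: permE. Qed.
Lemma alcE z : alc z = ca z. Proof. exact: permE. Qed.

Lemma phicE x b : (alc * sgc)%g (x, b) = ((al * sg)%g x, b).
Proof.
by rewrite permM alcE sgcE /cs /ca /= permM hw -addbA addbb addbF.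
Qed.

Local Notation e := (rel_of sg al).
Local Notation e2 := (rel_of sgc alc).

Lemma e_sym : connect_sym e. Proof. exact: rel_of_sym. Qed.
Lemma e2_sym : connect_sym e2. Proof. exact: rel_of_sym. Qed.

Lemma cover_V : 2 * #|porbits sg| <= #|porbits sgc|.
Proof.
pose g (z : D * bool) := (porbit sg z.1, z.2 (+) h0 z.1).
have inv : forall z, g (sgc z) = g z.
  move=> [x b]; rewrite sgcE /g /cs /= porbit_step hh0.
  by congr (_, _); rewrite addbA -(addbA b) (addbC (w x)) addbA -addbA addbb addbF.
apply: leq_trans (orbit_count inv).
have hsub : setX (porbits sg) [set: bool] \subset [set g x | x : D * bool].
  apply/subsetP => [[O c]]; rewrite inE /= inE andbT => /imsetP[x _ ->].
  apply/imsetP; exists (x, c (+) h0 x) => //.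
  by rewrite /g /= -addbA addbb addbF.
by have := subset_leq_card hsub; rewrite cardsX cardsT card_bool mulnC.
Qed.

Lemma cover_F : 2 * #|porbits (al * sg)| <= #|porbits (alc * sgc)|.
Proof.
pose g (z : D * bool) := (porbit (al * sg) z.1, z.2).
have inv : forall z, g ((alc * sgc)%g z) = g z.
  by move=> [x b]; rewrite phicE /g /= porbit_step.
apply: leq_trans (orbit_count inv).
have hsub : setX (porbits (al * sg)) [set: bool] \subset [set g x | x : D * bool].
  apply/subsetP => [[O c]]; rewrite inE /= inE andbT => /imsetP[x _ ->].
  by apply/imsetP; exists (x, c).
by have := subset_leq_card hsub; rewrite cardsX cardsT card_bool mulnC.
Qed.

Lemma cover_A : #|D| <= #|porbits alc|.
Proof.
have := @invol_count _ alc.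
rewrite card_prod card_bool => H.
suff: 2 * #|D| <= 2 * #|porbits alc| by rewrite leq_pmul2l.
rewrite mulnC; apply: H => -[x b]; rewrite !alcE /ca /=.
by rewrite (proj2 (hal x)) hw -addbA addbb addbF.
Qed.

Lemma base_A : #|D| <= 2 * #|porbits al|.
Proof. by apply: invol_count => x; case: (hal x). Qed.

Lemma cover_comp : 2 * n_comp e D <= n_comp e2 ((D * bool)%type : finType).
Proof.
have := RH_ineq sgc alc; rewrite /RHprop card_prod card_bool.
have := cover_V; have := cover_F; have := cover_A; have := base_A; move: planar.
set V := #|porbits sg|; set F := #|porbits (al * sg)|; set P := #|porbits al|.
set C := n_comp e D; set V2 := #|porbits sgc|; set F2 := #|porbits (alc * sgc)|.
set P2 := #|porbits alc|; set C2 := n_comp e2 _; set N := #|D|.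
clearbody V F P C V2 F2 P2 C2 N; lia.
Qed.

Lemma lift u v b : connect e u v -> [exists c, connect e2 (u, b) (v, c)].
Proof.
move=> c; apply: (@connect_inv _ e (fun z => [exists c, connect e2 (u, b) (z, c)]) u v) c.
  move=> z y /orP[] /eqP -> /existsP[c cz]; apply/existsP.
    exists (c (+) w z); apply: connect_trans cz (connect1 _).
    by rewrite /rel_of sgcE /cs eqxx.
  exists (c (+) w z); apply: connect_trans cz (connect1 _).
  by rewrite /rel_of alcE /ca eqxx orbT.
by apply/existsP; exists b.
Qed.

Lemma deck u b v c : connect e2 (u, b) (v, c) -> connect e2 (u, ~~ b) (v, ~~ c).
Proof.
pose f (z : D * bool) := (z.1, ~~ z.2).
move/(@connect_map _ _ e2 f) => H; apply: H => -[x d] y /orP[] /eqP ->; apply: connect1;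
  by rewrite /rel_of ?sgcE ?alcE /cs /ca /f /= addNb eqxx ?orbT.
Qed.

Lemma proj u b v c : connect e2 (u, b) (v, c) -> connect e u v.
Proof.
move/(@connect_map _ _ e (fun z => z.1)) => H; apply: H => -[x d] y /orP[] /eqP ->;
  apply: connect1; by rewrite /rel_of ?sgcE ?alcE /cs /ca /= eqxx ?orbT.
Qed.

Lemma cover_split x b : ~~ connect e2 (x, b) (x, ~~ b).
Proof.
apply/negP => bad.
have bad0 : connect e2 (x, false) (x, true).
  by case: b bad => // /(@deck _ _ _ _); rewrite e2_sym.
set r := fingraph.root e x.
have [c xc] : exists c, connect e2 (x, false) (r, c).
  by have /existsP := lift false (connect_root e x).
have rr : connect e2 (r, false) (r, true).
  have xc' := deck xc.
  have h1 : connect e2 (r, c) (x, true) by apply: (connect_trans _ bad0); rewrite e2_sym.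
  have h2 := connect_trans h1 xc'.
  case: c {xc xc' h1} h2 => // h2; by rewrite e2_sym.
pose q (z : D * bool) := (fingraph.root e z.1, connect e2 z (fingraph.root e z.1, true)).
have inj : {in [pred z | roots e2 z] &, injective q}.
  move=> z1 z2 /eqP r1 /eqP r2 [] E b12.
  have key : forall z, connect e2 z (fingraph.root e z.1, false) ->
      connect e2 z (fingraph.root e z.1, true) \/ ~~ connect e2 z (fingraph.root e z.1, true).
    by move=> z _; case: (connect e2 z _); [left | right].
  have ex : forall z : D * bool, exists d, connect e2 z (fingraph.root e z.1, d).
    move=> [y d]; have /existsP[d' h] := lift d (connect_root e y); by exists d'.
  suff : connect e2 z1 z2.
    by move/(fingraph.rootP e2_sym); rewrite r1 r2.
  case: (boolP (connect e2 z1 (fingraph.root e z1.1, true))) => h1.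
    have h2 : connect e2 z2 (fingraph.root e z2.1, true) by rewrite -b12.
    by apply: connect_trans h1 _; rewrite E e2_sym.
  have h2 : ~~ connect e2 z2 (fingraph.root e z2.1, true) by rewrite -b12.
  have [d1 c1] := ex z1; have [d2 c2] := ex z2.
  case: d1 c1 h1 => [-> // | c1 _]; case: d2 c2 h2 => [-> // | c2 _].
  by apply: connect_trans c1 _; rewrite E e2_sym.
have hsub : [set q z | z in [pred z | roots e2 z]] \subset
    setX [set y | roots e y] [set: bool] :\ (r, false).
  apply/subsetP => _ /imsetP[[y d] _ ->]; rewrite !inE /= roots_root ?andbT; last exact: e_sym.
  apply/negP => /andP[/eqP ry /negP nt]; apply: nt; rewrite /q /= in ry *.
  have /existsP[d' h] := lift d (connect_root e y).
  rewrite ry in h *; case: d' h => h; first by rewrite h.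
  by rewrite (connect_trans h rr).
have hc : (#|setX [set y | roots e y] [set: bool] :\ (r, false)|).+1 =
    2 * #|[pred y | roots e y]|.
  rewrite [in RHS](_ : 2 * _ = #|setX [set y | roots e y] [set: bool]|); last first.
    by rewrite cardsX cardsT card_bool mulnC; congr (_ * _); apply: eq_card => y; rewrite inE.
  by rewrite [in RHS](cardsD1 (r, false)) !inE /= /r (roots_root e_sym) /= add1n.
have := subset_leq_card hsub; rewrite card_in_imset //.
have := cover_comp; rewrite !n_compT.
have -> : #|[pred z | roots e2 z]| = #|[pred z | z \in [pred z | roots e2 z]]| by [].
move: hc; set A := #|[pred x | roots e x]|; set B := #|[pred z | z \in _]|.
set B' := #|setX _ _ :\ _|; clearbody A B B'; lia.
Qed.

Definition kap x := connect e2 (x, false) (fingraph.root e x, false).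

Lemma K1 y b : connect e2 (y, b) (fingraph.root e y, false) =
               ~~ connect e2 (y, ~~ b) (fingraph.root e y, false).
Proof.
set r := fingraph.root e y.
have /existsP[c h] := lift b (connect_root e y).
have h' := deck h.
case: c h h' => /= h h'.
  rewrite h' /=; apply/negbTE/negP => h2.
  have := cover_split r false; rewrite /= (@connect_trans _ _ (y, b)) //.
  by rewrite e2_sym.
rewrite h; apply/esym/negP => /negP/negP h2.
have := cover_split r true; rewrite /= (@connect_trans _ _ (y, ~~ b)) //.
by rewrite e2_sym.
Qed.

Lemma kap_phi x : kap (sg (al x)) = kap x.
Proof.
have c : connect e2 (x, false) (sg (al x), false).
  apply: (@connect_trans _ _ (alc (x, false))); apply: connect1.
    by rewrite /rel_of eqxx orbT.
  by rewrite /rel_of sgcE alcE /cs /ca /= hw addbb eqxx.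
have r : fingraph.root e (sg (al x)) = fingraph.root e x.
  by apply/esym/(fingraph.rootP e_sym); apply: proj c.
by rewrite /kap r (same_connect e2_sym c).
Qed.

Lemma kap_al x : kap (al x) = kap x (+) w x.
Proof.
have c : connect e2 (x, false) (al x, w x).
  by apply: connect1; rewrite /rel_of alcE /ca /= eqxx orbT.
have r : fingraph.root e (al x) = fingraph.root e x.
  by apply/esym/(fingraph.rootP e_sym); apply: proj c.
rewrite /kap; case: (w x) c => c; last first.
  by rewrite r addbF (same_connect e2_sym c).
by rewrite K1 /= r addbT (same_connect e2_sym c).
Qed.

End Cover.
Section CountClosed.
Variables (T : finType) (e : rel T) (a : {pred T}).
Hypothesis esym : forall x y, e x y -> e y x.
Hypothesis ea : forall x y, e x y -> x \in a.

Definition eclosed (C : {set T}) :=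
  [forall x, forall y, e x y ==> ((x \in C) == (y \in C))].

Lemma count_closed :
  #|[set C : {set T} | (C \subset a) && eclosed C]| = 2 ^ n_comp e a.
Proof.
have csym : connect_sym e by apply: sym_connect_sym => x y; apply/idP/idP => /esym.
pose R := [set x | roots e x && (x \in a)].
have nR : n_comp e a = #|R| by apply: eq_card => x; rewrite !inE.
pose f (Q : {set T}) := [set x | (x \in a) && (fingraph.root e x \in Q)].
have cla : closed e a.
  by move=> x y exy; rewrite (ea exy) (ea (esym exy)).
have ra : forall x, x \in a -> fingraph.root e x \in a.
  by move=> x xa; rewrite -(closed_connect cla (connect_root e x)).
have inj : {in powerset R &, injective f}.
  move=> Q1 Q2; rewrite !powersetE => s1 s2 E; apply/setP => r.
  suff H : forall Q Q' : {set T}, Q \subset R -> f Q = f Q' -> r \in Q -> r \in Q'.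
    by apply/idP/idP; [apply: H | apply: H] => //.
  move=> Q Q' sQ EQ rQ; have := subsetP sQ r rQ; rewrite inE => /andP[/eqP rr ra'].
  have : r \in f Q by rewrite inE ra' rr.
  by rewrite EQ inE rr => /andP[].
rewrite nR -card_powerset -(card_in_imset inj); apply: eq_card => C.
rewrite inE; apply/andP/imsetP => [[sCa /forallP clC] | [Q]].
  have clC' : closed e (mem C).
    move=> x y exy; have := forallP (clC x) y; rewrite exy /= => /eqP //.
  exists (C :&: R).
    by rewrite powersetE subsetIr.
  apply/setP => x; rewrite !inE.
  apply/idP/idP => [xC | /andP[xa /andP[rC _]]].
    rewrite (subsetP sCa x xC) /= -(closed_connect clC' (connect_root e x)) xC /=.
    by rewrite roots_root // ra // (subsetP sCa x xC).
  by rewrite (closed_connect clC' (connect_root e x)).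
rewrite powersetE => sQ ->; split.
  by apply/subsetP => x; rewrite inE => /andP[].
apply/forallP => x; apply/forallP => y; apply/implyP => exy.
rewrite !inE (ea exy) (ea (esym exy)) /=.
by rewrite (fingraph.rootP csym (connect1 exy)).
Qed.

End CountClosed.
Section Main.
Variables (D : finType) (sigma alpha : {perm D}) (M : {set D}).
Hypothesis htri : trivalent sigma.
Hypothesis hinv : dart_involution alpha.
Hypothesis hpm : perfect_matching sigma alpha M.
Hypothesis hpl : planar_map sigma alpha.

Local Notation sg := sigma.
Local Notation al := alpha.

Lemma s3 x : sg (sg (sg x)) = x. Proof. by case: (htri x). Qed.
Lemma aa x : al (al x) = x. Proof. by case: (hinv x). Qed.
Lemma ax x : al x != x. Proof. by case: (hinv x). Qed.

Lemma alM x : (al x \in M) = (x \in M).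
Proof.
have H : forall y, y \in M -> al y \in M.
  by case: hpm => /forallP H _ y yM; have := H y; rewrite yM.
by apply/idP/idP => [/H | /H //]; rewrite aa.
Qed.

Lemma degM x : (x \in M) + (sg x \in M) + (sg (sg x) \in M) = 1.
Proof. by case: hpm => _ /(_ x). Qed.

Lemma mM_s m : m \in M -> (sg m \in M) = false.
Proof. by move=> mM; have := degM m; rewrite mM; case: (sg m \in M). Qed.
Lemma mM_ss m : m \in M -> (sg (sg m) \in M) = false.
Proof. by move=> mM; have := degM m; rewrite mM; case: (sg (sg m) \in M); case: (sg m \in M). Qed.

Lemma nM_x x : x \notin M -> (sg (sg x) \in M) = ~~ (sg x \in M).
Proof.
move=> /negbTE xM; have := degM x; rewrite xM.
by case: (sg x \in M); case: (sg (sg x) \in M).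
Qed.

Lemma hh0 x : (sg (sg x) \in M) = (sg x \in M) (+) (x \notin M).
Proof.
have := degM x.
by case: (x \in M); case: (sg x \in M); case: (sg (sg x) \in M).
Qed.

Lemma conn_nM S x : x \notin M -> conn sigma alpha M S x \notin M.
Proof.
move=> xM; rewrite /conn.
case: ifP => h.
  have aM : al (sg (sg x)) \in M by rewrite alM.
  by case: ifP => _; rewrite ?(mM_s aM) ?(mM_ss aM).
have sM : sg x \in M by move: (nM_x xM); rewrite h => /esym/negbFE.
have aM : al (sg x) \in M by rewrite alM.
by case: ifP => _; rewrite ?(mM_s aM) ?(mM_ss aM).
Qed.

Definition locb (s : bool) (C : {set D}) (m : D) :=
  if s then ((sg m \in C) == (sg (al m) \in C)) && ((sg (sg m) \in C) == (sg (sg (al m)) \in C))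
  else ((sg m \in C) == (sg (sg (al m)) \in C)) && ((sg (sg m) \in C) == (sg (al m) \in C)).

Definition aclosed (C : {set D}) := [forall x, (x \notin M) ==> ((al x \in C) == (x \in C))].

Definition nonM := [pred x | x \notin M].

Definition good S (C : {set D}) := (C \subset nonM) && eclosed (curve_rel sigma alpha M S) C.

Lemma conn_x1 S m : m \in M ->
  conn sigma alpha M S (sg m) = if m \in S then sg (al m) else sg (sg (al m)).
Proof. by move=> mM; rewrite /conn s3 mM. Qed.

Lemma conn_x2 S m : m \in M ->
  conn sigma alpha M S (sg (sg m)) = if m \in S then sg (sg (al m)) else sg (al m).
Proof. by move=> mM; rewrite /conn s3 mM_s // s3. Qed.

Lemma good_char S (C : {set D}) : C \subset nonM ->
  good S C = aclosed C && [forall m in M, locb (m \in S) C m].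
Proof.
move=> sC; rewrite /good sC /=.
apply/idP/idP.
  move=> /forallP cl.
  have clr : forall x y, curve_rel sigma alpha M S x y -> (x \in C) = (y \in C).
    by move=> x y r; have := forallP (cl x) y; rewrite r => /eqP.
  apply/andP; split.
    apply/forallP => x; apply/implyP => xM; rewrite eq_sym; apply/eqP/clr.
    by rewrite /curve_rel xM alM xM eqxx.
  apply/forallP => m; apply/implyP => mM.
  have x1M : sg m \notin M by rewrite mM_s.
  have x2M : sg (sg m) \notin M by rewrite mM_ss.
  have h1 : (sg m \in C) = (conn sigma alpha M S (sg m) \in C).
    by apply: clr; rewrite /curve_rel x1M conn_nM // eqxx !orbT.
  have h2 : (sg (sg m) \in C) = (conn sigma alpha M S (sg (sg m)) \in C).
    by apply: clr; rewrite /curve_rel x2M conn_nM // eqxx !orbT.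
  rewrite conn_x1 // in h1; rewrite conn_x2 // in h2.
  rewrite /locb; case: (m \in S) h1 h2 => -> // ->; by rewrite !eqxx.
case/andP => /forallP acl /forallP loc.
have cx : forall x, x \notin M -> (x \in C) = (conn sigma alpha M S x \in C).
  move=> x xM.
  case: (boolP (sg (sg x) \in M)) => h.
    rewrite -{1 2}(s3 x) conn_x1 //.
    have := implyP (loc _) h; rewrite /locb.
    by case: (_ \in S) => /andP[/eqP -> _].
  have sM : sg x \in M by move: (nM_x xM); rewrite (negbTE h) => /esym/negbFE.
  rewrite -{1 2}(s3 x) conn_x2 //.
  have := implyP (loc _) sM; rewrite /locb.
  by case: (_ \in S) => /andP[_ /eqP ->].
apply/forallP => x; apply/forallP => y; apply/implyP.
case/and3P => xM yM /or3P[] /eqP E.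
- by rewrite E; have := implyP (acl x) xM => /eqP ->.
- by rewrite E -cx.
- by rewrite E -cx.
Qed.


Lemma stepA S : #|[set C : {set D} | good S C]| = 2 ^ ncurves sigma alpha M S.
Proof.
rewrite /good (@count_closed _ _ nonM) //.
  move=> x y /and3P[xM yM /or3P[] /eqP E]; rewrite /curve_rel xM yM /=.
  - by rewrite E aa eqxx.
  - by rewrite E eqxx !orbT.
  - by rewrite E eqxx orbT.
by move=> x y /and3P[].
Qed.

Lemma state_al S : state alpha M S -> forall x, (al x \in S) = (x \in S).
Proof.
case/andP => _ /forallP H.
have H' : forall y, y \in S -> al y \in S by move=> y yS; have := H y; rewrite yS.
by move=> x; apply/idP/idP => [/H' | /H' //]; rewrite aa.
Qed.

Lemma state_sub S : state alpha M S -> S \subset M.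
Proof. by case/andP. Qed.

Definition TF (C : {set D}) :=
  [&& C \subset nonM, aclosed C & [forall m in M, (sg m \in C) != (sg (sg m) \in C)]].

Definition SC (C : {set D}) := [set m in M | (sg m \in C) == (sg (al m) \in C)].

Definition kk := kap sigma alpha (fun x => x \notin M).

Lemma hw' x : (al x \notin M) = (x \notin M). Proof. by rewrite alM. Qed.
Lemma hal' x : al x != x /\ al (al x) = x. Proof. exact: hinv. Qed.
Lemma hh0' x : (sg (sg x) \in M) = (sg x \in M) (+) (x \notin M). Proof. exact: hh0. Qed.

Lemma kk_phi x : kk (sg (al x)) = kk x.
Proof. exact: (kap_phi sigma hw'). Qed.

Lemma kk_al x : kk (al x) = kk x (+) (x \notin M).
Proof.
exact: (@kap_al D sigma alpha (fun x => x \notin M) (fun x => sg x \in M) hal' hw' hh0' hpl x).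
Qed.

Lemma kk_m m : m \in M -> [/\ kk (al m) = kk m, kk (sg m) = kk m & kk (sg (sg m)) = ~~ kk m].
Proof.
move=> mM.
have e1 : kk (al m) = kk m by rewrite kk_al mM addbF.
have e2 : kk (sg m) = kk m by rewrite -{1}(aa m) kk_phi e1.
split => //.
by rewrite -{1}(aa (sg m)) kk_phi kk_al mM_s // addbT e2.
Qed.

Definition R := [set m in M | (enum_rank m < enum_rank (al m))%N].

Lemma MR : M :\: R = al @: R.
Proof.
apply/setP => x; rewrite !inE; apply/idP/idP.
  case/andP => /negP nR xM; apply/imsetP; exists (al x); last by rewrite aa.
  rewrite inE alM xM aa /=; case: ltngtP nR => //; first by rewrite xM.
  move/val_inj/enum_rank_inj => E; by move: (ax x); rewrite -E eqxx.
case/imsetP => y; rewrite inE => /andP[yM lt] ->; rewrite alM yM andbT aa.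
by rewrite -leqNgt ltnW.
Qed.

Lemma sumM (f : D -> nat) : \sum_(m in M) f m = \sum_(m in R) (f m + f (al m)).
Proof.
rewrite big_split /= (big_setID R) /=.
have -> : M :&: R = R by apply/setIidPr/subsetP => x; rewrite inE => /andP[].
rewrite MR big_imset //; move=> x y _ _; exact: perm_inj.
Qed.

Lemma cardM : #|M| = 2 * #|R|.
Proof.
by rewrite -sum1_card sumM (eq_bigr (fun _ => 2)) // sum_nat_const mulnC.
Qed.


Section TFsec.
Variable C : {set D}.
Hypothesis hTF : TF C.

Lemma tf_sub : C \subset nonM. Proof. by case/and3P: hTF. Qed.
Lemma tf_nM x : x \in C -> x \notin M. Proof. by move/(subsetP tf_sub). Qed.
Lemma tf_acl x : x \notin M -> (al x \in C) = (x \in C).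
Proof. by case/and3P: hTF => _ /forallP /(_ x) /implyP H _ /H /eqP. Qed.
Lemma tf_v m : m \in M -> (sg m \in C) = ~~ (sg (sg m) \in C).
Proof.
case/and3P: hTF => _ _ /forallP /(_ m) /implyP H /H.
by case: (_ \in C); case: (_ \in C).
Qed.

Definition cc m := sg (sg m) \in C.
Definition gg m := if cc m then sg (sg m) else sg m.

Lemma gg_in m : m \in M -> gg m \in C.
Proof. by move=> mM; rewrite /gg; case: ifP => // /negbT; rewrite (tf_v mM). Qed.

Lemma gg_inj : {in M &, injective gg}.
Proof.
move=> m1 m2 M1 M2; rewrite /gg.
case: ifP => _; case: ifP => _.
- by move/perm_inj/perm_inj.
- move=> E; have : sg m1 = m2 by apply: (@perm_inj _ sg).
  by move=> E'; move: M2; rewrite -E' mM_s.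
- move=> E; have : m1 = sg m2 by apply: (@perm_inj _ sg).
  by move=> E'; move: M1; rewrite E' mM_s.
- by move/perm_inj.
Qed.

Lemma C_img : C = gg @: M.
Proof.
apply/setP => x; apply/idP/imsetP => [xC | [m mM ->]]; last exact: gg_in.
have xM := tf_nM xC.
case: (boolP (sg (sg x) \in M)) => h.
  exists (sg (sg x)) => //; rewrite /gg /cc !s3.
  by have := tf_v h; rewrite s3 xC => /esym /negbTE ->.
have sM : sg x \in M by move: (nM_x xM); rewrite (negbTE h) => /esym/negbFE.
by exists (sg x) => //; rewrite /gg /cc !s3 xC.
Qed.

Lemma kk_gg m : m \in M -> kk (gg m) = kk m (+) cc m.
Proof.
move=> mM; case: (kk_m mM) => _ e2 e3; rewrite /gg.
by case: (cc m); rewrite ?e2 ?e3 ?addbT ?addbF.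
Qed.

Lemma sumC_kk : \sum_(x in C) (kk x : nat) = #|R|.
Proof.
have h1 : \sum_(x in C) (kk x : nat) = \sum_(x in C) (~~ kk x : nat).
  have Eal : C = al @: C.
    apply/setP => x; apply/idP/imsetP => [xC | [y yC ->]].
      by exists (al x); rewrite ?aa // tf_acl ?tf_nM.
    by rewrite tf_acl ?tf_nM.
  rewrite {1}Eal big_imset /=; last by move=> x y _ _; apply: perm_inj.
  by apply: eq_bigr => x xC; rewrite kk_al tf_nM // addbT.
have h2 : \sum_(x in C) (kk x : nat) + \sum_(x in C) (~~ kk x : nat) = #|C|.
  rewrite -big_split /= -sum1_card; apply: eq_bigr => x _; by case: (kk x).
have h3 : #|C| = #|M| by rewrite C_img card_in_imset //; apply: gg_inj.
move: h2; rewrite -h1 h3 cardM addnn -mul2n => /eqP; rewrite eqn_pmul2l // => /eqP //.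
Qed.

Lemma parity_SC : ~~ odd (#|SC C| ./2).
Proof.
have hS : #|SC C| = \sum_(m in M) ((cc m == cc (al m)) : nat).
  rewrite -sum1_card big_mkcond /= [in RHS]big_mkcond /=; apply: eq_bigr => m _.
  rewrite inE; case: (boolP (m \in M)) => //= mM.
  by rewrite (tf_v mM) (tf_v (_ : al m \in M)) ?alM // /cc; case: (_ \in C); case: (_ \in C).
pose E := \sum_(m in R) ((cc m == cc (al m)) : nat).
have hE : #|SC C| = 2 * E.
  rewrite hS sumM /E big_distrr /=; apply: eq_bigr => m _; rewrite aa eq_sym; lia.
have hK : \sum_(m in M) ((kk m (+) cc m) : nat) = #|R|.
  rewrite -sumC_kk C_img big_imset /=; last exact: gg_inj.
  by apply: eq_bigr => m mM; rewrite kk_gg.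
pose Y := \sum_(m in R) (((kk m (+) cc m) && (kk m (+) cc (al m))) : nat).
pose Nq := \sum_(m in R) ((cc m != cc (al m)) : nat).
have h1 : \sum_(m in M) ((kk m (+) cc m) : nat) = Nq + 2 * Y.
  rewrite sumM /Nq /Y big_distrr -big_split /=; apply: eq_bigr => m.
  rewrite inE => /andP[mM _]; case: (kk_m mM) => -> _ _.
  by case: (kk m); case: (cc m); case: (cc (al m)).
have h2 : #|R| = Nq + E.
  rewrite -sum1_card /Nq /E -big_split /=; apply: eq_bigr => m _.
  by case: (cc m); case: (cc (al m)).
rewrite hE; have : E = 2 * Y by lia.
by move=> ->; rewrite !mul2n half_double odd_double.
Qed.

End TFsec.

Local Open Scope ring_scope.
Import GRing.Theory Num.Theory.

Lemma locb_TF C s m : TF C -> m \in M -> locb s C m = (s == (m \in SC C)).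
Proof.
move=> tf mM; have aM : al m \in M by rewrite alM.
move: (tf_v tf mM) (tf_v tf aM); rewrite /locb inE mM /=.
case: (sg m \in C); case: (sg (sg m) \in C); case: (sg (al m) \in C);
  case: (sg (sg (al m)) \in C); case: s => //.
Qed.

Lemma SC_state C : state alpha M (SC C).
Proof.
apply/andP; split; first by apply/subsetP => x; rewrite inE => /andP[].
apply/forallP => x; apply/implyP; rewrite !inE alM aa => /andP[-> /eqP ->].
by rewrite eqxx.
Qed.

Lemma good_TF S C : TF C -> state alpha M S -> good S C = (S == SC C).
Proof.
move=> tf st; rewrite good_char ?(tf_sub tf) //.
case/and3P: (tf) => _ -> _ /=.
apply/forallP/eqP => [H | ->]; last first.
  by move=> m; apply/implyP => mM; rewrite locb_TF // eqxx.
apply/setP => x; case: (boolP (x \in M)) => xM.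
  by have := implyP (H x) xM; rewrite locb_TF // => /eqP.
have -> : (x \in S) = false by apply/negbTE; apply: contra xM; apply/subsetP/state_sub.
by rewrite inE (negbTE xM).
Qed.

Lemma sgn_SC C : TF C -> (-1 : rat) ^+ (#|SC C|./2) = 1.
Proof. by move=> tf; rewrite -signr_odd (negbTE (parity_SC tf)) expr0. Qed.

Section NonTF.
Variables (C : {set D}) (m0 : D).
Hypothesis m0M : m0 \in M.
Hypothesis e0 : (sg m0 \in C) = (sg (sg m0) \in C).

Definition X0 := [set m0; al m0].
Definition hS (S : {set D}) := (S :\: X0) :|: (X0 :\: S).

Lemma in_hS S x : (x \in hS S) = (x \in S) (+) (x \in X0).
Proof. by rewrite /hS in_setU !in_setD; case: (x \in S); case: (x \in X0). Qed.

Lemma hS_inv : involutive hS.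
Proof. by move=> S; apply/setP => x; rewrite !in_hS -addbA addbb addbF. Qed.

Lemma hS_inj : injective hS. Proof. exact: inv_inj hS_inv. Qed.

Lemma X0_al x : (al x \in X0) = (x \in X0).
Proof.
rewrite !inE; apply/idP/idP => /orP[] /eqP E.
- by rewrite -E aa eqxx orbT.
- by rewrite -(aa x) E aa eqxx.
- by rewrite E eqxx orbT.
- by rewrite E aa eqxx.
Qed.

Lemma X0_M x : x \in X0 -> x \in M.
Proof. by rewrite !inE => /orP[] /eqP ->; rewrite ?alM. Qed.

Lemma state_hS1 S : state alpha M S -> state alpha M (hS S).
Proof.
move=> st; apply/andP; split.
  apply/subsetP => x; rewrite in_hS; case: (boolP (x \in X0)) => [/X0_M // | _].
  by rewrite addbF; apply/subsetP/state_sub.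
apply/forallP => x; apply/implyP; by rewrite !in_hS (state_al st) X0_al.
Qed.

Lemma state_hS S : state alpha M (hS S) = state alpha M S.
Proof.
apply/idP/idP => [/state_hS1 | /state_hS1 //]; by rewrite hS_inv.
Qed.

Lemma locb_free s s' m : m \in X0 -> locb s C m = locb s' C m.
Proof.
rewrite !inE => /orP[] /eqP ->; rewrite /locb ?aa.
  by move: e0; case: (sg m0 \in C); case: (sg (sg m0) \in C); case: (sg (al m0) \in C);
    case: (sg (sg (al m0)) \in C); case: s; case: s'.
by move: e0; case: (sg m0 \in C); case: (sg (sg m0) \in C); case: (sg (al m0) \in C);
    case: (sg (sg (al m0)) \in C); case: s; case: s'.
Qed.

Lemma good_hS S : C \subset nonM -> good (hS S) C = good S C.
Proof.
move=> sC; rewrite !good_char //; congr (_ && _); apply: eq_forallb => m.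
congr (_ ==> _); rewrite in_hS; case: (boolP (m \in X0)) => mX; last by rewrite addbF.
exact: locb_free.
Qed.

Lemma card_X0 : #|X0| = 2%N.
Proof. by rewrite cards2 eq_sym ax. Qed.

Lemma sgn_hS S : state alpha M S ->
  (-1 : rat) ^+ (#|hS S|./2) = - (-1) ^+ (#|S|./2).
Proof.
move=> st.
have m0S : (al m0 \in S) = (m0 \in S) by rewrite (state_al st).
case: (boolP (m0 \in S)) => h.
  have sub : X0 \subset S by apply/subsetP => x; rewrite !inE => /orP[] /eqP ->; rewrite ?m0S.
  have -> : hS S = S :\: X0.
    apply/setP => x; rewrite in_hS in_setD; case: (boolP (x \in X0)) => xX /=.
      by rewrite (subsetP sub x xX).
    by rewrite addbF.
  have E : #|S| = (#|S :\: X0| + 2)%N.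
    by rewrite -(cardsID X0 S) (setIidPr sub) card_X0 addnC.
  by rewrite E addn2 /= exprS mulN1r opprK.
have xnS : forall x, x \in X0 -> (x \in S) = false.
  move=> x; rewrite !inE => /orP[] /eqP ->; by rewrite ?m0S (negbTE h).
have -> : hS S = S :|: X0.
  apply/setP => x; rewrite in_hS in_setU; case: (boolP (x \in X0)) => xX; last by rewrite addbF orbF.
  by rewrite xnS.
have I0 : S :&: X0 = set0.
  apply/setP => x; rewrite !inE; case: (boolP (x \in X0)) => xX; first by rewrite xnS.
  by move: xX; rewrite !inE => /negbTE ->; rewrite andbF.
rewrite cardsU I0 cards0 subn0 card_X0 addn2 /= exprS mulN1r //.
Qed.

Lemma sum_zero : C \subset nonM ->
  \sum_(S | state alpha M S) (-1 : rat) ^+ (#|S|./2) * (good S C)%:R = 0.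
Proof.
move=> sC.
set Sm := \sum_(S | _) _.
have : Sm = - Sm.
  rewrite {1}/Sm (reindex_inj hS_inj) /=.
  rewrite (eq_bigl (fun S => state alpha M S)); last by move=> S; rewrite state_hS.
  rewrite /Sm -sumrN; apply: eq_bigr => S st.
  by rewrite good_hS // sgn_hS // mulNr.
move=> E; apply/eqP; rewrite -(eqr_pMn2r (_ : 0 < 2)%N) // mul0rn mulr2n.
by rewrite {2}E subrr.
Qed.

End NonTF.

Lemma sumC C : \sum_(S | state alpha M S) (-1 : rat) ^+ (#|S|./2) * (good S C)%:R = (TF C)%:R.
Proof.
case sC: (C \subset nonM); last first.
  rewrite /TF sC big1 // => S _; by rewrite /good sC mulr0.
case acl: (aclosed C); last first.
  rewrite /TF acl andbF big1 // => S _; by rewrite good_char // acl mulr0.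
case: (boolP [forall m in M, (sg m \in C) != (sg (sg m) \in C)]) => hv.
  have tf : TF C by rewrite /TF sC acl hv.
  rewrite tf (bigD1 (SC C)) /=; last exact: SC_state.
  rewrite big1 ?addr0; last first.
    by move=> S /andP[st ne]; rewrite good_TF // (negbTE ne) mulr0.
  by rewrite good_TF ?SC_state // eqxx mulr1 sgn_SC.
have tf : TF C = false by rewrite /TF sC acl (negbTE hv).
rewrite tf; move: hv => /forallPn [m0]; rewrite negb_imply => /andP[m0M /negPn /eqP e0].
exact: (sum_zero m0M e0 sC).
Qed.

Lemma deg_rot S x : deg_at sigma S (sg x) = deg_at sigma S x.
Proof. by rewrite /deg_at s3 [in LHS]addnC addnA. Qed.

Lemma deg_any S x : (forall m, m \in M -> deg_at sigma S m = 2%N) -> deg_at sigma S x = 2%N.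
Proof.
move=> H; have := degM x.
case: (boolP (x \in M)) => [xM _ | _]; first exact: H.
case: (boolP (sg x \in M)) => [sM _ | _ /=]; first by rewrite -deg_rot H.
case: (boolP (sg (sg x) \in M)) => // ssM _.
by rewrite -deg_rot -deg_rot H.
Qed.

Lemma stepD : #|[set C | TF C]| = #|two_factors_containing sigma alpha M|.
Proof.
have inj : {in [set C | TF C] &, injective (fun C => C :|: M)}.
  move=> C1 C2; rewrite !inE => t1 t2 E; apply/setP => x.
  case: (boolP (x \in M)) => xM.
    by apply/idP/idP => /[dup] h; [move/(tf_nM t1) | move/(tf_nM t2)]; rewrite xM.
  by move/setP: E => /(_ x); rewrite !in_setU (negbTE xM) !orbF.
rewrite -(card_in_imset inj); apply: eq_card => F.
rewrite /two_factors_containing inE; apply/imsetP/and3P.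
  case=> C; rewrite inE => tf ->; split.
  - apply/forallP => x; apply/implyP; rewrite !in_setU => /orP[xC | xM].
      by rewrite tf_acl ?xC ?(tf_nM tf).
    by rewrite alM xM orbT.
  - apply/forallP => x; apply/eqP; apply: deg_any => m mM.
    rewrite /deg_at !in_setU mM (mM_s mM) (mM_ss mM) !orbF (tf_v tf mM) orbT.
    by case: (_ \in C).
  - exact: subsetUr.
case=> acF /forallP dF sMF; exists (F :\: M).
  rewrite inE /TF; apply/and3P; split.
  - by apply/subsetP => x; rewrite inE => /andP[].
  - apply/forallP => x; apply/implyP => xM; rewrite !in_setD alM (negbTE xM) /=.
    have H : forall y, y \in F -> al y \in F by move=> y yF; have := forallP acF y; rewrite yF.
    apply/eqP; apply/idP/idP => [/H | /H //]; by rewrite aa.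
  - apply/forallP => m; apply/implyP => mM.
    have := eqP (dF m); rewrite /deg_at (subsetP sMF m mM) !in_setD (mM_s mM) (mM_ss mM) /=.
    by case: (sg m \in F); case: (sg (sg m) \in F).
apply/setP => x; rewrite in_setU in_setD.
case: (boolP (x \in M)) => xM; last by rewrite orbF.
by rewrite (subsetP sMF x xM).
Qed.

Lemma card_sum (P : {set D} -> bool) : (#|[set C | P C]|)%:R = \sum_C (P C)%:R :> rat.
Proof.
rewrite -sum1_card big_mkcond /= natr_sum; apply: eq_bigr => C _.
by rewrite inE; case: (P C).
Qed.

Lemma main_eq : two_factor_bracket sigma alpha M (1 : rat)
  = (#|two_factors_containing sigma alpha M|)%:R.
Proof.
rewrite /two_factor_bracket.
have E : forall S : {set D}, (- (1 : rat)) ^+ (#|S|./2) * (1 + 1^-1) ^+ ncurves sigma alpha M S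
    = \sum_C (-1) ^+ (#|S|./2) * (good S C)%:R.
  move=> S; have h2 : (1 + 1 : rat) = 2%:R by rewrite mulr2n.
  by rewrite invr1 h2 -natrX -stepA card_sum mulr_sumr.
rewrite (eq_bigr _ (fun S _ => E S)) exchange_big /=.
rewrite (eq_bigr _ (fun C _ => sumC C)) -stepD card_sum //.
Qed.

End Main.

Local Open Scope ring_scope.

Theorem theorem1p2 (D : finType) (sigma alpha : {perm D}) (M : {set D}) :
  trivalent sigma -> dart_involution alpha -> planar_map sigma alpha ->
  perfect_matching sigma alpha M ->
  two_factor_bracket sigma alpha M (1 : rat)
  = (#|two_factors_containing sigma alpha M|)%:R.
Proof.
move=> htri hinv hpl hpm; exact: main_eq.
Qed.
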